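(* Let $\mathcal{A}$ be a line arrangement in $\mathbb{P}^2_{\mathbb{C}}$ with $n=|\mathcal{A}|$. If $n\le 5$, then $\mathcal{A}$ is of type $\mathcal{C}_0$ or $\mathcal{C}_1$. If $n\le 6$, then $\mathcal{A}$ is of type $\mathcal{C}_0$, $\mathcal{C}_1$ or $\mathcal{C}_2$.
   Context: $\operatorname{mult}(\mathcal{A})$ is the set of points on at least three lines of $\mathcal{A}$. $\mathcal{A}$ is of type $\mathcal{C}_k$ if $k$ is the minimal number of lines of $\mathcal{A}$ whose union contains $\operatorname{mult}(\mathcal{A})$. *)

(* Defs.v *)
From HB Require Import structures.
From mathcomp Require Import all_boot all_order all_algebra all_field.
Set Implicit Arguments. Unset Strict Implicit. Unset Printing Implicit Defensive.
Import Order.TTheory GRing.Theory Num.Theory.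
Local Open Scope ring_scope.

(* Homogeneous coordinates: a point or a line of P^2_C is a nonzero row
   vector of C^3, taken up to a nonzero scalar. *)
Definition hvec := 'rV[algC]_3.

Definition incident (p l : hvec) : bool := (p *m l^T) 0 0 == 0.

Definition proj_eq (u v : hvec) : Prop := exists2 c : algC, c != 0 & v = c *: u.

Definition line_arrangement (A : seq hvec) : Prop :=
  (forall l, l \in A -> l != 0) /\
  (forall i j, (i < size A)%N -> (j < size A)%N -> i <> j ->
     ~ proj_eq (nth 0 A i) (nth 0 A j)).

Definition in_mult (A : seq hvec) (p : hvec) : Prop :=
  p != 0 /\ (3 <= count (incident p) A)%N.

Definition covers_mult (A S : seq hvec) : Prop :=
  forall p, in_mult A p -> exists2 l, l \in S & incident p l.

Definition type_C (A : seq hvec) (k : nat) : Prop :=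
  (exists S : seq hvec, [/\ uniq S, {subset S <= A}, size S = k & covers_mult A S])
  /\ (forall S : seq hvec, {subset S <= A} -> covers_mult A S -> (k <= size S)%N).

(* Main.v *)
Require Import Defs.
From mathcomp Require Import all_boot all_order all_algebra all_field.
From mathcomp Require Import ring.
Import GRing.Theory.
Local Open Scope ring_scope.
Set Implicit Arguments. Unset Strict Implicit.
Definition i0 : 'I_3 := @Ordinal 3 0 isT.
Definition i1 : 'I_3 := @Ordinal 3 1 isT.
Definition i2 : 'I_3 := @Ordinal 3 2 isT.
Lemma dotE (p l : hvec) : (p *m l^T) 0 0 = p 0 i0 * l 0 i0 + p 0 i1 * l 0 i1 + p 0 i2 * l 0 i2.
Proof.
rewrite !mxE !big_ord_recr big_ord0 /= add0r !mxE.
by congr (_ * _ + _ * _ + _ * _); congr (_ _ _); apply/val_inj.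
Qed.
Lemma hvecP (u v : hvec) : u 0 i0 = v 0 i0 -> u 0 i1 = v 0 i1 -> u 0 i2 = v 0 i2 -> u = v.
Proof.
move=> h0 h1 h2; apply/rowP => -[[|[|[|k]]] Hk] //.
- by rewrite (_ : Ordinal Hk = i0) //; apply/val_inj.
- by rewrite (_ : Ordinal Hk = i1) //; apply/val_inj.
- by rewrite (_ : Ordinal Hk = i2) //; apply/val_inj.
Qed.
Lemma nz_coord (u : hvec) : u != 0 -> [\/ u 0 i0 != 0, u 0 i1 != 0 | u 0 i2 != 0].
Proof.
move=> nz; apply/or3P; apply/negPn/negP; rewrite !negb_or !negbK => /and3P[/eqP a /eqP b /eqP c].
by move/eqP: nz; apply; apply: hvecP; rewrite ?mxE.
Qed.
Lemma par (u0 u1 u2 v0 v1 v2 : algC) : [\/ u0 != 0, u1 != 0 | u2 != 0] ->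
  u0 * v1 = u1 * v0 -> u0 * v2 = u2 * v0 -> u1 * v2 = u2 * v1 ->
  exists c, [/\ v0 = c * u0, v1 = c * u1 & v2 = c * u2].
Proof.
case=> nz h1 h2 h3.
- exists (v0 / u0); split.
  + by field.
  + by apply: (mulfI nz); rewrite h1; field.
  + by apply: (mulfI nz); rewrite h2; field.
- exists (v1 / u1); split.
  + by apply: (mulfI nz); rewrite -h1; field.
  + by field.
  + by apply: (mulfI nz); rewrite h3; field.
- exists (v2 / u2); split.
  + by apply: (mulfI nz); rewrite -h2; field.
  + by apply: (mulfI nz); rewrite -h3; field.
  + by field.
Qed.
Lemma cross_of (p0 p1 p2 l0 l1 l2 m0 m1 m2 : algC) :
  p0 * l0 + p1 * l1 + p2 * l2 = 0 -> p0 * m0 + p1 * m1 + p2 * m2 = 0 ->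
  [/\ (l1* m2 - l2* m1) * p1 = (l2* m0 - l0* m2) * p0,
      (l1* m2 - l2* m1) * p2 = (l0* m1 - l1* m0) * p0 &
      (l2* m0 - l0* m2) * p2 = (l0* m1 - l1* m0) * p1].
Proof.
move=> dl dm; split; apply/eqP; rewrite -subr_eq0.
- have -> : (l1* m2 - l2* m1) * p1 - (l2* m0 - l0* m2) * p0 = m2*(p0 * l0 + p1 * l1 + p2 * l2) - l2*(p0 * m0 + p1 * m1 + p2 * m2) by ring.
  by rewrite dl dm !mulr0 subr0.
- have -> : (l1* m2 - l2* m1) * p2 - (l0* m1 - l1* m0) * p0 = l1*(p0 * m0 + p1 * m1 + p2 * m2) - m1*(p0 * l0 + p1 * l1 + p2 * l2) by ring.
  by rewrite dl dm !mulr0 subr0.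
- have -> : (l2* m0 - l0* m2) * p2 - (l0* m1 - l1* m0) * p1 = m0*(p0 * l0 + p1 * l1 + p2 * l2) - l0*(p0 * m0 + p1 * m1 + p2 * m2) by ring.
  by rewrite dl dm !mulr0 subr0.
Qed.
Lemma incE (p l : hvec) : incident p l -> p 0 i0 * l 0 i0 + p 0 i1 * l 0 i1 + p 0 i2 * l 0 i2 = 0.
Proof. by rewrite /incident dotE => /eqP. Qed.
Lemma incZ (c : algC) (p l : hvec) : incident p l -> incident (c *: p) l.
Proof. by rewrite /incident => /eqP h; rewrite -scalemxAl [X in X == _]mxE h mulr0. Qed.

Lemma two_lines (p q l m : hvec) : p != 0 -> q != 0 -> l != 0 -> m != 0 ->
  ~ proj_eq l m -> incident p l -> incident p m -> incident q l -> incident q m ->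
  proj_eq p q.
Proof.
move=> pnz qnz lnz mnz nlm /incE pl /incE pm /incE ql /incE qm.
set l0 := l 0 i0 in pl ql *; set l1 := l 0 i1 in pl ql *; set l2 := l 0 i2 in pl ql *.
set m0 := m 0 i0 in pm qm *; set m1 := m 0 i1 in pm qm *; set m2 := m 0 i2 in pm qm *.
have wnz : [\/ l1* m2 - l2* m1 != 0, l2* m0 - l0* m2 != 0 | l0* m1 - l1* m0 != 0].
  apply/or3P; apply/negPn/negP; rewrite !negb_or !negbK.
  move=> /and3P[/eqP a /eqP b /eqP c].
  have [k [h0 h1 h2]] := par (nz_coord lnz) (subr0_eq c) (esym (subr0_eq b)) (subr0_eq a).
  have kz : k != 0.
    apply/negP=> /eqP kz; move/eqP: mnz; apply; apply: hvecP;
    by rewrite ?mxE -/m0 -/m1 -/m2 ?h0 ?h1 ?h2 kz mul0r.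
  by apply: nlm; exists k => //; apply: hvecP; rewrite ?mxE.
have [ap bp cp] := cross_of pl pm.
have [aq bq cq] := cross_of ql qm.
have [c [c0 c1 c2]] := par wnz ap bp cp.
have [d [d0 d1 d2]] := par wnz aq bq cq.
have cnz : c != 0.
  apply/negP=> /eqP cz; move/eqP: pnz; apply; apply: hvecP;
  by rewrite ?mxE ?c0 ?c1 ?c2 cz mul0r.
have dnz : d != 0.
  apply/negP=> /eqP dz; move/eqP: qnz; apply; apply: hvecP;
  by rewrite ?mxE ?d0 ?d1 ?d2 dz mul0r.
exists (d / c); first by rewrite mulf_neq0 ?invr_eq0.
apply: hvecP; rewrite !mxE ?c0 ?c1 ?c2 ?d0 ?d1 ?d2; field; done.
Qed.
From Stdlib Require Import Classical.
From mathcomp Require Import zify.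

Lemma count_card (T : eqType) (x0 : T) (a : pred T) (s : seq T) :
  count a s = #|[set i : 'I_(size s) | a (nth x0 s i)]|.
Proof.
rewrite -sum1_count (big_nth x0) big_mkord sum1_card.
by apply: eq_card => i; rewrite inE.
Qed.

Lemma exists_type (A : seq hvec) m : forall S, {subset S <= A} -> covers_mult A S ->
  (size S <= m)%N -> exists k, (k <= m)%N /\ type_C A k.
Proof.
elim: m => [|m IH] S sS cS hS.
  exists 0%N; split => //; split.
    by exists ([::]); split => //; case: S sS cS hS => // _ _ _.
  by move=> *.
case: (classic (exists S', [/\ {subset S' <= A}, covers_mult A S' & (size S' <= m)%N])).
  by case=> S' [s1 s2 s3]; have [k [hk tk]] := IH S' s1 s2 s3; exists k; split => //; lia.
move=> nS; exists (size S); split => //; split.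
  exists (undup S); split; first exact: undup_uniq.
  - by move=> x; rewrite mem_undup; apply: sS.
  - apply/eqP; rewrite eqn_leq size_undup /= leqNgt; apply/negP => lt.
    apply: nS; exists (undup S); split.
    + by move=> x; rewrite mem_undup; apply: sS.
    + by move=> p /cS [l hl hp]; exists l; rewrite ?mem_undup.
    + by rewrite -ltnS (leq_trans lt hS).
  - by move=> p /cS [l hl hp]; exists l; rewrite ?mem_undup.
move=> S' s1 s2; rewrite leqNgt; apply/negP => lt; apply: nS; exists S'; split => //; by rewrite -ltnS (leq_trans lt hS).
Qed.

Definition Lset (A : seq hvec) (p : hvec) := [set i : 'I_(size A) | incident p (nth 0 A i)].

Lemma mult_card A p : in_mult A p -> (3 <= #|Lset A p|)%N.
Proof. by case=> _; rewrite (count_card 0). Qed.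

Lemma inter_le1 A p q : line_arrangement A -> p != 0 -> q != 0 -> ~ proj_eq p q ->
  (#|Lset A p :&: Lset A q| <= 1)%N.
Proof.
move=> [hA1 hA2] pnz qnz npq; rewrite leqNgt; apply/negP => /card_gt1P [i [j [Hi Hj nij]]].
move: Hi Hj; rewrite !inE => /andP[pi qi] /andP[pj qj].
apply: npq; apply: (two_lines pnz qnz _ _ _ pi pj qi qj).
- by apply: hA1; apply: mem_nth.
- by apply: hA1; apply: mem_nth.
apply: hA2 => // h; move: nij; rewrite (_ : i = j) ?eqxx //; exact: val_inj.
Qed.

Lemma disj_card (T : finType) (X Y : {set T}) : (forall k, k \in X -> k \in Y -> False) ->
  #|X :|: Y| = (#|X| + #|Y|)%N.
Proof.
move=> h; rewrite cardsU (_ : X :&: Y = set0) ?cards0 ?subn0 //.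
by apply/setP => k; rewrite !inE; apply/negP => /andP[a b]; apply: (h k).
Qed.

Lemma nproj (p r l : hvec) : incident p l -> ~~ incident r l -> ~ proj_eq p r.
Proof. by move=> pl rl [c _ e]; move/negP: rl; apply; rewrite e; apply: incZ. Qed.

Lemma inL A p (i : 'I_(size A)) : (i \in Lset A p) = incident p (nth 0 A i).
Proof. by rewrite inE. Qed.

Lemma main_cover A : line_arrangement A -> (size A <= 6)%N ->
  exists S, [/\ {subset S <= A}, covers_mult A S, (size S <= 2)%N &
     ((size A <= 5)%N -> (size S <= 1)%N)].
Proof.
move=> hA hn.
have memA : forall i : 'I_(size A), nth 0 A i \in A by move=> i; apply: mem_nth.
have cardT : forall X : {set 'I_(size A)}, (#|X| <= size A)%N.
  by move=> X; rewrite -[X in (_ <= X)%N]card_ord max_card.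
case: (classic (exists p q (i : 'I_(size A)), [/\ in_mult A p, in_mult A q, ~ proj_eq p q,
          i \in Lset A p & i \in Lset A q])).
  case=> p [q [i [mp mq npq ip iq]]].
  set U := Lset A p :|: Lset A q.
  have hU : (5 <= #|U|)%N.
    have := cardsUI (Lset A p) (Lset A q); have := inter_le1 hA mp.1 mq.1 npq.
    have := mult_card mp; have := mult_card mq; rewrite -/U; lia.
  have hC : #|~: U| = (size A - #|U|)%N by rewrite [#|U|]cardsCs card_ord subKn ?cardT.
  have key : forall r, in_mult A r -> ~~ incident r (nth 0 A i) ->
      exists2 j, j \in Lset A r & j \in ~: U.
    move=> r mr nr.
    have npr : ~ proj_eq p r by apply: nproj nr; rewrite -inL.
    have nqr : ~ proj_eq q r by apply: nproj nr; rewrite -inL.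
    have h1 := inter_le1 hA mp.1 mr.1 npr.
    have h2 := inter_le1 hA mq.1 mr.1 nqr.
    have h3 := cardsID U (Lset A r).
    have h4 : (#|Lset A r :&: U| <= #|Lset A p :&: Lset A r| + #|Lset A q :&: Lset A r|)%N.
      rewrite /U setIUr (setIC (Lset A r)) (setIC (Lset A r)) cardsU; lia.
    have h5 := mult_card mr.
    have : (0 < #|Lset A r :\: U|)%N by lia.
    case/card_gt0P => j; rewrite inE => /andP[jU jr]; by exists j => //; rewrite inE; exact: jU.
  case: (set_0Vmem (~: U)) => [C0 | [j0 j0C]].
    exists ([:: nth 0 A i]); split => //.
    - by move=> x; rewrite inE => /eqP ->.
    - move=> r mr; case: (boolP (incident r (nth 0 A i))) => ri.
        by exists (nth 0 A i); rewrite ?inE.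
      by case: (key r mr ri) => j _; rewrite C0 inE.
  exists ([:: nth 0 A i; nth 0 A j0]); split => //.
  - by move=> x; rewrite !inE => /orP[] /eqP ->.
  - move=> r mr; case: (boolP (incident r (nth 0 A i))) => ri.
      by exists (nth 0 A i); rewrite ?inE ?eqxx.
    case: (key r mr ri) => j jr jC.
    case: (eqVneq j j0) => [ejj | njj].
      by exists (nth 0 A j0); rewrite ?inE ?eqxx ?orbT // -inL -ejj.
    have : (1 < #|~: U|)%N by apply/card_gt1P; exists j, j0.
    lia.
  - move=> h5; have : (0 < #|~: U|)%N by apply/card_gt0P; exists j0.
    lia.
move=> nC.
have disj : forall p q, in_mult A p -> in_mult A q -> ~ proj_eq p q ->
    #|Lset A p :|: Lset A q| = (#|Lset A p| + #|Lset A q|)%N.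
  move=> p q mp mq npq; apply: disj_card => k kp kq; apply: nC; by exists p, q, k; split.
case: (classic (exists p, in_mult A p)); last first.
  move=> np; exists ([::]); split => //.
  by move=> p mp; case: np; exists p.
case=> p mp.
have : (0 < #|Lset A p|)%N by have := mult_card mp; lia.
case/card_gt0P => i ip.
case: (classic (forall r, in_mult A r -> incident r (nth 0 A i))) => hall.
  exists ([:: nth 0 A i]); split => //.
  - by move=> x; rewrite inE => /eqP ->.
  - by move=> r mr; exists (nth 0 A i); rewrite ?inE ?hall.
have [q hq] := not_all_ex_not _ _ hall.
have mq := not_imply_elim _ _ hq.
have /negP nq := not_imply_elim2 _ _ hq.
have npq : ~ proj_eq p q by apply: nproj nq; rewrite -inL.
have : (0 < #|Lset A q|)%N by have := mult_card mq; lia.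
case/card_gt0P => j jq.
have hpq := disj _ _ mp mq npq.
exists ([:: nth 0 A i; nth 0 A j]); split => //.
- by move=> x; rewrite !inE => /orP[] /eqP ->.
- move=> r mr; case: (boolP (incident r (nth 0 A i))) => ri.
    by exists (nth 0 A i); rewrite ?inE ?eqxx.
  case: (boolP (incident r (nth 0 A j))) => rj.
    by exists (nth 0 A j); rewrite ?inE ?eqxx ?orbT.
  have npr : ~ proj_eq p r by apply: nproj ri; rewrite -inL.
  have nqr : ~ proj_eq q r by apply: nproj rj; rewrite -inL.
  have h3 : #|(Lset A p :|: Lset A q) :|: Lset A r| = (#|Lset A p :|: Lset A q| + #|Lset A r|)%N.
    apply: disj_card => k; rewrite inE => /orP[] kx kr; apply: nC;
      [exists p, r, k | exists q, r, k]; split => //.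
  have := cardT ((Lset A p :|: Lset A q) :|: Lset A r).
  rewrite h3 hpq => hc; exfalso.
  have := mult_card mp; have := mult_card mq; have := mult_card mr.
  move: hc hn; set a := #|Lset A p|; set b := #|Lset A q|; set c := #|Lset A r|; set n := size A.
  lia.
- move=> h5; have := cardT (Lset A p :|: Lset A q).
  rewrite hpq => hc; exfalso.
  have := mult_card mp; have := mult_card mq.
  move: hc h5; set a := #|Lset A p|; set b := #|Lset A q|; set n := size A.
  lia.
Qed.

Theorem mainTheorem11 (A : seq hvec) (hA : line_arrangement A) :
  ((size A <= 5)%N -> type_C A 0 \/ type_C A 1) /\
  ((size A <= 6)%N -> type_C A 0 \/ type_C A 1 \/ type_C A 2).
Proof.
split => hn.
  have [S [s1 s2 s3 s4]] := main_cover hA (leq_trans hn (leqnSn 5)).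
  have [k [hk tk]] := exists_type s1 s2 (s4 hn).
  by case: k hk tk => [|[|k]] // _ t; [left|right].
have [S [s1 s2 s3 s4]] := main_cover hA hn.
have [k [hk tk]] := exists_type s1 s2 s3.
by case: k hk tk => [|[|[|k]]] // _ t; [left|right; left|right; right].
Qed.
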